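(* Let $q\geqslant 9$ be a prime power. Then the $q$-ary Hamming code $\mathcal{H}_{2,q}$ (a $[q+1,q-1,3]_q$ MDS code) is log-concave.
   Context: The $q$-ary Hamming code $\mathcal{H}_{m,q}$ is the $\mathbb{F}_q$-linear code of length $n=(q^m-1)/(q-1)$ whose parity-check matrix has as columns one nonzero representative of each $1$-dimensional subspace of $\mathbb{F}_q^m$ (equivalently, the dual of the $q$-ary simplex code). For a linear code of length $n$, $A_i$ is the number of codewords of weight $i$; the nonzero weight distribution is the subsequence $a_0,\dots,a_N$ of $A_0,\dots,A_n$ of its nonzero values, in order; the code is log-concave if $a_i^2\geqslant a_{i-1}a_{i+1}$ for all $1\leqslant i\leqslant N-1$. *)

(* Defs.v *)
From HB Require Import structures.
From mathcomp Require Import all_boot all_order all_algebra all_field.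
Set Implicit Arguments. Unset Strict Implicit. Unset Printing Implicit Defensive.
Import GRing.Theory.
Local Open Scope ring_scope.

Definition hamming_pcm (F : finFieldType) (m n : nat) (H : 'M[F]_(m, n)) : Prop :=
  (forall j : 'I_n, col j H != 0) /\
  (forall v : 'cV[F]_m, v != 0 -> exists! j : 'I_n, exists a : F, col j H = a *: v).

Definition wt (F : finFieldType) (n : nat) (c : 'rV[F]_n) : nat :=
  #|[set j : 'I_n | c 0 j != 0]|.

Definition in_code (F : finFieldType) (m n : nat) (H : 'M[F]_(m, n)) (c : 'rV[F]_n) : bool :=
  H *m c^T == 0.

Definition wdist (F : finFieldType) (m n : nat) (H : 'M[F]_(m, n)) (i : nat) : nat :=
  #|[set c : 'rV[F]_n | in_code H c && (wt c == i)%N]|.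

Definition nz_wdist (F : finFieldType) (m n : nat) (H : 'M[F]_(m, n)) : seq nat :=
  [seq x <- [seq wdist H i | i <- iota 0 n.+1] | x != 0%N].

Definition log_concave_seq (a : seq nat) : Prop :=
  forall i : nat, (1 <= i)%N -> (i.+1 < size a)%N ->
    (nth 0%N a i.-1 * nth 0%N a i.+1 <= nth 0%N a i ^ 2)%N.

Definition code_log_concave (F : finFieldType) (m n : nat) (H : 'M[F]_(m, n)) : Prop :=
  log_concave_seq (nz_wdist H).

(* Main.v *)
Require Import Defs.
From mathcomp Require Import all_boot all_order all_algebra all_field.
From mathcomp Require Import ring lra zify.
Set Implicit Arguments. Unset Strict Implicit. Unset Printing Implicit Defensive.
Import Order.TTheory GRing.Theory Num.Theory.
Local Open Scope ring_scope.

Lemma w4 (q : int) : 9 <= q ->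
  4%:R * (q - 3) * (q - 1) ^+ 3 * (2 * (q - 1) * (3 * q - 1) + (4 * q - 1) + (q - 1) ^+ 2 * (2 * q - 1))
  <= (q + 2) * (q - 1) * ((q - 1) ^+ 3 - (3 * q - 1)) ^+ 2.
Proof.
move=> q9; rewrite -subr_ge0.
have -> : q = (q - 9) + 9 by ring.
have : 0 <= q - 9 by rewrite subr_ge0.
move: (q - 9) => t t0.
have h : forall k : nat, 0 <= t ^+ k by move=> k; apply: exprn_ge0.
have := h 2%N; have := h 3%N; have := h 4%N; have := h 5%N; have := h 6%N; have := h 7%N; have := h 8%N.
lia.
Qed.
Lemma big_X (P : int) (m : nat) : 8 <= P -> (5 <= m)%N ->
  8 * (m.+1)%:R ^+ 2 * (P + 1) ^+ 2 <= P ^+ m.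
Proof.
move=> P8 m5; have -> : m = (m - 5 + 5)%N by rewrite subnK.
elim: (m - 5)%N => [|k IH].
  rewrite add0n.
  have h3 : 512 <= P ^+ 3 by have := P8; nia.
  have -> : P ^+ 5 = P ^+ 3 * P ^+ 2 by rewrite -exprD.
  have -> : (5.+1)%:R = 6 :> int by [].
  have h4 : 512 * P ^+ 2 <= P ^+ 3 * P ^+ 2 by apply: ler_wpM2r => //; apply: exprn_ge0; lia.
  apply: le_trans h4; rewrite !expr2; nia.
rewrite addSn (exprS P).
have -> : (k + 5).+2%:R = (k + 5).+1%:R + 1 :> int by rewrite -addn1 natrD.
move: IH; set z := (k + 5).+1%:R; set Y := P ^+ (k + 5).
move=> IH.
have hz : 1 <= z by rewrite /z ler1n.
have h1 : (z + 1) ^+ 2 <= 8 * z ^+ 2 by nia.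
have h0 : 0 <= 8 * z ^+ 2 * (P + 1) ^+ 2 by rewrite !mulr_ge0 ?exprn_ge0 //; lia.
have h2 : 8 * (8 * z ^+ 2 * (P + 1) ^+ 2) <= P * Y by apply: ler_pM.
have h3 : (z + 1) ^+ 2 * (P + 1) ^+ 2 <= 8 * z ^+ 2 * (P + 1) ^+ 2.
  by apply: ler_wpM2r => //; apply: exprn_ge0; lia.
lia.
Qed.
Lemma chain (P q X K T w aw : int) : q = P + 1 -> 8 <= P -> 0 <= aw -> aw <= w * q ->
  0 <= K -> K <= w * q -> 0 <= T -> T <= w * q ^+ 3 -> 1 <= w ->
  8 * w ^+ 2 * q ^+ 2 <= X ->
  K * X * T <= (q + 2) * P * (X - aw) ^+ 2.
Proof.
move=> Eq P8 a0 aw1 K0 K1 T0 T1 w1 HX.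
have q0 : 9 <= q by lia.
have u1 : 1 <= w * q by clear -w1 q0; nia.
have HX' : 8 * (w * q) ^+ 2 <= X by rewrite exprMn mulrA.
have X0 : 0 <= X by apply: le_trans HX'; rewrite mulr_ge0 // exprn_ge0 //; lia.
have h1 : 2 * aw <= X.
  apply: le_trans HX'; move: (w * q) u1 aw1 => u u1 aw1; clear -u1 aw1 a0; nia.
have h2 : X ^+ 2 <= 4 * (X - aw) ^+ 2.
  have -> : 4 * (X - aw) ^+ 2 = (2 * (X - aw)) ^+ 2 by ring.
  by apply: ler_pM => //; lia.
have h3 : K * X * T <= w ^+ 2 * q ^+ 4 * X.
  have hKT : K * T <= (w * q) * (w * q ^+ 3) by apply: ler_pM.
  have : K * T * X <= (w * q) * (w * q ^+ 3) * X by apply: ler_wpM2r.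
  have -> : (w * q) * (w * q ^+ 3) * X = w ^+ 2 * q ^+ 4 * X by ring.
  by rewrite mulrAC.
have h4 : 4 * w ^+ 2 * q ^+ 3 <= P * X.
  have : P * (8 * w ^+ 2 * q ^+ 2) <= P * X by apply: ler_wpM2l => //; lia.
  apply: le_trans.
  have -> : P * (8 * w ^+ 2 * q ^+ 2) = (2 * P) * (4 * w ^+ 2 * q ^+ 2) by ring.
  have -> : 4 * w ^+ 2 * q ^+ 3 = q * (4 * w ^+ 2 * q ^+ 2) by ring.
  apply: ler_wpM2r; first by rewrite !mulr_ge0 ?exprn_ge0 //; lia.
  lia.
have h5 : w ^+ 2 * q ^+ 4 * X * 4 <= q * P * X ^+ 2.
  have -> : w ^+ 2 * q ^+ 4 * X * 4 = (4 * w ^+ 2 * q ^+ 3) * (q * X) by ring.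
  have -> : q * P * X ^+ 2 = (P * X) * (q * X) by ring.
  apply: ler_wpM2r => //; rewrite mulr_ge0 //; lia.
have h6 : q * P * X ^+ 2 <= 4 * ((q + 2) * P * (X - aw) ^+ 2).
  have -> : 4 * ((q + 2) * P * (X - aw) ^+ 2) = ((q + 2) * P) * (4 * (X - aw) ^+ 2) by ring.
  apply: ler_pM => //; rewrite ?mulr_ge0 ?exprn_ge0 //; try lia.
have h7 : 0 <= X ^+ 2 by apply: exprn_ge0.
clear -h3 h5 h6.
move: (K * X * T) (w ^+ 2 * q ^+ 4 * X) (q * P * X ^+ 2) ((q + 2) * P * (X - aw) ^+ 2) h3 h5 h6.
move=> a b c d; lia.
Qed.
Definition Phi (q : int) (w : nat) : int :=
  (q - 1) ^+ w + (-1) ^+ w * ((q - 1) * (q + 1 - w%:R * q)).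

Lemma Phi_shape (q : int) (m : nat) :
  let P := q - 1 in let X := P ^+ m in let mm : int := m%:R in
  [/\ Phi q m = X + (-1) ^+ m * (P * (q + 1 - mm * q)),
      Phi q m.+1 = P * X - (-1) ^+ m * (P * (q + 1 - (mm + 1) * q)) &
      Phi q m.+2 = P * P * X + (-1) ^+ m * (P * (q + 1 - (mm + 2) * q))].
Proof.
move=> P X mm; rewrite /Phi /X /mm /P; split => //.
  have -> : (m.+1)%:R = m%:R + 1 :> int by rewrite -addn1 natrD.
  by rewrite exprS [(-1) ^+ _.+1]exprS; ring.
have -> : (m.+2)%:R = m%:R + 2 :> int by rewrite -addn2 natrD.
by rewrite !exprS; ring.
Qed.

Lemma core (q : int) (m : nat) : 9 <= q -> (3 <= m)%N -> (m.+1)%:R <= q ->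
  (m.+1)%:R * (q - m%:R) * (Phi q m * Phi q m.+2)
  <= (q + 1 - m%:R) * (m.+2)%:R * Phi q m.+1 ^+ 2.
Proof.
move=> q9 m3 mq.
have [E0 E1 E2] := Phi_shape q m.
rewrite E0 E1 E2 -signr_odd; clear E0 E1 E2.
have Em1 : (m.+1)%:R = m%:R + 1 :> int by rewrite -addn1 natrD.
have Em2 : (m.+2)%:R = m%:R + 2 :> int by rewrite -addn2 natrD.
rewrite Em1 Em2 in mq *.
have m3' : 3 <= m%:R :> int by rewrite (ler_nat int 3 m).
set P := q - 1; set X := P ^+ m; set mm : int := m%:R.
have P8 : 8 <= P by rewrite /P; lia.
have X0 : 0 <= X by rewrite /X exprn_ge0 //; lia.
set K := (mm + 1) * (q - mm).
have K0 : 0 <= K by rewrite /K mulr_ge0 //; lia.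
have -> : (q + 1 - mm) * (mm + 2) = K + (q + 2) by rewrite /K; ring.
set aw := mm * q - 1; set aw1 := (mm + 1) * q - 1; set awm := (mm - 1) * q - 1.
have aw0 : 0 <= aw by rewrite /aw; clear -q9 m3' mq; nia.
have awm0 : 0 <= awm by rewrite /awm; clear -q9 m3' mq; nia.
have aw10 : 0 <= aw1 by rewrite /aw1; clear -q9 m3' mq; nia.
case Hodd: (odd m); rewrite ?expr1 ?expr0.
  set T := 2 * P * aw + aw1 + P ^+ 2 * awm.
  have Id : (X + -1 * (P * (q + 1 - mm * q))) * (P * P * X + -1 * (P * (q + 1 - (mm + 2) * q)))
     = (P * X - -1 * (P * (q + 1 - (mm + 1) * q))) ^+ 2 + P * X * T - P ^+ 2 * q ^+ 2.
    by rewrite /T /aw /aw1 /awm /P; ring.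
  have Id2 : (P * X - -1 * (P * (q + 1 - (mm + 1) * q))) ^+ 2 = P ^+ 2 * (X - aw) ^+ 2.
    by rewrite /aw /P; ring.
  rewrite Id Id2; clear Id Id2.
  suff S : K * X * T <= (q + 2) * P * (X - aw) ^+ 2.
    have S' : K * (P * X * T) <= (q + 2) * P ^+ 2 * (X - aw) ^+ 2.
      have : P * (K * X * T) <= P * ((q + 2) * P * (X - aw) ^+ 2) by apply: ler_wpM2l => //; lia.
      have -> : P * (K * X * T) = K * (P * X * T) by ring.
      have -> : P * ((q + 2) * P * (X - aw) ^+ 2) = (q + 2) * P ^+ 2 * (X - aw) ^+ 2 by ring.
      by [].
    have hq : 0 <= K * (P ^+ 2 * q ^+ 2) by rewrite mulr_ge0 // mulr_ge0 // exprn_ge0 //; lia.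
    have -> : K * (P ^+ 2 * (X - aw) ^+ 2 + P * X * T - P ^+ 2 * q ^+ 2)
      = K * (P ^+ 2 * (X - aw) ^+ 2) + K * (P * X * T) - K * (P ^+ 2 * q ^+ 2) by ring.
    have -> : (K + (q + 2)) * (P ^+ 2 * (X - aw) ^+ 2)
      = K * (P ^+ 2 * (X - aw) ^+ 2) + (q + 2) * P ^+ 2 * (X - aw) ^+ 2 by ring.
    lra.
  have [m3e|m5] := eqVneq m 3%N.
    have mm3 : mm = 3 by rewrite /mm m3e.
    have L1 : K * X * T = 4%:R * (q - 3) * (q - 1) ^+ 3 * (2 * (q - 1) * (3 * q - 1) + (4 * q - 1) + (q - 1) ^+ 2 * (2 * q - 1)).
      by rewrite /K /T /aw /aw1 /awm /X mm3 m3e /P; ring.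
    have R1 : (q + 2) * P * (X - aw) ^+ 2 = (q + 2) * (q - 1) * ((q - 1) ^+ 3 - (3 * q - 1)) ^+ 2.
      by rewrite /aw /X mm3 m3e /P; ring.
    by rewrite L1 R1; exact: w4.
  have [m4|m4] := eqVneq m 4%N; first by rewrite m4 in Hodd.
  have m5' : (5 <= m)%N by lia.
  have Eq : q = P + 1 by rewrite /P; ring.
  have W1 : 1 <= mm + 1 by lia.
  have hb : forall a : int, 0 <= a -> a <= (mm + 1) * q -> a <= (mm + 1) * q by [].
  have awW : aw <= (mm + 1) * q by rewrite /aw; clear -q9 m3' mq; nia.
  have aw1W : aw1 <= (mm + 1) * q by rewrite /aw1; clear -q9 m3' mq; nia.
  have awmW : awm <= (mm + 1) * q by rewrite /awm; clear -q9 m3' mq; nia.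
  have KW : K <= (mm + 1) * q by rewrite /K; clear -q9 m3' mq; nia.
  have P0 : 0 <= P by lia.
  have T0 : 0 <= T.
    rewrite /T; apply: addr_ge0; [apply: addr_ge0|]; rewrite ?mulr_ge0 ?exprn_ge0 //.
  have TW : T <= (mm + 1) * q ^+ 3.
    have h1 : 2 * P * aw <= 2 * P * ((mm + 1) * q) by apply: ler_wpM2l => //; lia.
    have h2 : P ^+ 2 * awm <= P ^+ 2 * ((mm + 1) * q) by apply: ler_wpM2l => //; apply: exprn_ge0.
    have -> : (mm + 1) * q ^+ 3 = 2 * P * ((mm + 1) * q) + (mm + 1) * q + P ^+ 2 * ((mm + 1) * q).
      by rewrite Eq; ring.
    rewrite /T; lra.
  have HX : 8 * (mm + 1) ^+ 2 * q ^+ 2 <= X.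
    by have := big_X P8 m5'; rewrite Em1 -Eq.
  exact: (chain Eq P8 aw0 awW K0 KW T0 TW W1 HX).
set Dg := 2 * P ^+ 2 * X * aw + P * X * aw1 + P ^+ 3 * X * awm + P ^+ 2 * q ^+ 2.
have Id : (X + 1 * (P * (q + 1 - mm * q))) * (P * P * X + 1 * (P * (q + 1 - (mm + 2) * q)))
   = (P * X - 1 * (P * (q + 1 - (mm + 1) * q))) ^+ 2 - Dg.
  by rewrite /Dg /aw /aw1 /awm /P; ring.
rewrite Id; clear Id.
have P0 : 0 <= P by lia.
have D0 : 0 <= Dg.
  have q0 : 0 <= q by lia.
  rewrite /Dg; repeat apply: addr_ge0; repeat apply: mulr_ge0; rewrite ?exprn_ge0 //.
move: (P * X - 1 * (P * (q + 1 - (mm + 1) * q))) => Z.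
have Y0 : 0 <= Z ^+ 2 by apply: sqr_ge0.
move: (Z ^+ 2) Y0 => Y Y0.
have h1 : 0 <= K * Dg by exact: mulr_ge0 K0 D0.
have h2 : 0 <= (q + 2) * Y by apply: mulr_ge0 => //; lia.
have -> : (K + (q + 2)) * Y = K * (Y - Dg) + (K * Dg + (q + 2) * Y) by ring.
rewrite lerDl; exact: addr_ge0.
Qed.

Section Count.
Variable F : finFieldType.
Variable n : nat.
Variable H : 'M[F]_(2, n).

Definition det2 (u v : 'cV[F]_2) : F := u 0 0 * v 1 0 - u 1 0 * v 0 0.
Definition supp (c : 'rV[F]_n) := [set j | c 0 j != 0].
Definition cnt (S : {set 'I_n}) (r : 'cV[F]_2) : nat :=
  #|[set c : 'rV[F]_n | (supp c == S) && (H *m c^T == r)]|.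

Lemma mul_delta k : H *m (delta_mx 0 k)^T = col k H.
Proof. by rewrite trmx_delta colE. Qed.

Lemma addr_eqsub (V : zmodType) (x y z : V) : (x + y == z) = (x == z - y).
Proof. by apply/eqP/eqP => [<-|->]; rewrite ?addrK ?subrK. Qed.

Lemma cnt_rec (S : {set 'I_n}) (k : 'I_n) (r : 'cV[F]_2) : k \notin S ->
  cnt (k |: S) r = (\sum_(a : F | a != 0%R) cnt S (r - a *: col k H))%N.
Proof.
move=> kS; rewrite /cnt -sum1_card.
rewrite (partition_big (fun c : 'rV[F]_n => c 0 k) (fun a => a != 0)); last first.
  by move=> c; rewrite inE => /andP[/eqP Hs _]; move: (setU11 k S); rewrite -Hs inE.
apply: eq_bigr => a a0.
rewrite -sum1_card.
rewrite (reindex_inj (addIr (a *: delta_mx 0 k))).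
apply: eq_bigl => c; rewrite !inE.
have Hd : forall j, (a *: delta_mx (0 : 'I_1) k) 0 j = if j == k then a else 0.
  by move=> j; rewrite !mxE eqxx /= mulr_natr; case: (j == k).
have E1 : H *m (c + a *: delta_mx 0 k)^T = H *m c^T + a *: col k H.
  by rewrite linearD linearZ /= mulmxDr -scalemxAr mul_delta.
rewrite E1 addr_eqsub.
rewrite mxE Hd eqxx addr_eqsub subrr.
have [ck0|ck0] := eqVneq (c 0 k) 0; last first.
  rewrite andbF; apply/esym/negbTE; rewrite negb_and; apply/orP; left.
  by apply/eqP => Es; move: kS; rewrite -Es inE ck0.
rewrite andbT; congr (_ && _).
have -> : supp (c + a *: delta_mx 0 k) = k |: supp c.
  apply/setP => j; rewrite !inE mxE Hd.
  by case: (eqVneq j k) => [->|_]; rewrite ?ck0 ?add0r ?a0 ?addr0 ?eqxx.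
have kc : k \notin supp c by rewrite /supp inE ck0 eqxx.
apply/eqP/eqP => [E|->//]; by rewrite -(setU1K kc) E setU1K.
Qed.

Lemma det2_lin (r u g : 'cV[F]_2) a : det2 (r - a *: u) g = det2 r g - a * det2 u g.
Proof. by rewrite /det2 !mxE; ring. Qed.

Lemma det2_self (u : 'cV[F]_2) : det2 u u = 0.
Proof. by rewrite /det2; ring. Qed.

Lemma det2Z (u g : 'cV[F]_2) a : det2 (a *: u) g = a * det2 u g.
Proof. by rewrite /det2 !mxE; ring. Qed.

Lemma det2_0 (u : 'cV[F]_2) : det2 0 u = 0.
Proof. by rewrite /det2 !mxE; ring. Qed.

Lemma cV2_eq0 (v : 'cV[F]_2) : v 0 0 = 0 -> v 1 0 = 0 -> v = 0.
Proof.
move=> h0 h1; apply/matrixP => i j; rewrite mxE (ord1 j).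
by case: i => [[|[|//]] Hi] /=; [rewrite -h0 | rewrite -h1]; congr (v _ _); apply: val_inj.
Qed.

Lemma zero_iff (v u g : 'cV[F]_2) : det2 u g != 0 -> det2 v u = 0 -> det2 v g = 0 -> v = 0.
Proof.
move=> Hug Hvu Hvg; apply: cV2_eq0.
  have : v 0 0 * det2 u g = 0.
    have -> : v 0 0 * det2 u g = u 0 0 * det2 v g - g 0 0 * det2 v u by rewrite /det2; ring.
    by rewrite Hvu Hvg; ring.
  by move/eqP; rewrite mulf_eq0 (negbTE Hug) orbF => /eqP.
have : v 1 0 * det2 u g = 0.
  have -> : v 1 0 * det2 u g = u 1 0 * det2 v g - g 1 0 * det2 v u by rewrite /det2; ring.
  by rewrite Hvu Hvg; ring.
by move/eqP; rewrite mulf_eq0 (negbTE Hug) orbF => /eqP.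
Qed.

Lemma exists_g (u : 'cV[F]_2) : u != 0 -> exists g, det2 u g != 0.
Proof.
move=> nz.
have [h0|h0] := eqVneq (u 0 0) 0.
  have [h1|h1] := eqVneq (u 1 0) 0; first by move: nz; rewrite (cV2_eq0 h0 h1) eqxx.
  exists (delta_mx 0 0); rewrite /det2 !mxE /= mulr0 mulr1 sub0r oppr_eq0 //.
exists (delta_mx 1 0); rewrite /det2 !mxE /= mulr0 mulr1 subr0 //.
Qed.

Lemma sum_eq1 (a0 : F) : \sum_(a : F | a != 0) ((a == a0)%:R : int) = (a0 != 0)%:R.
Proof.
have [->|nz] := eqVneq a0 0; first by rewrite big1 // => a /negbTE ->.
by rewrite (bigD1 a0) //= eqxx big1 ?addr0 // => a /andP[_ /negbTE ->].
Qed.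

Lemma count_line (r u g : 'cV[F]_2) : det2 u g != 0 ->
  \sum_(a : F | a != 0) ((det2 (r - a *: u) g == 0)%:R : int) = (det2 r g != 0)%:R.
Proof.
move=> nz.
have -> : (det2 r g != 0) = (det2 r g / det2 u g != 0).
  by rewrite mulf_eq0 invr_eq0 (negbTE nz) orbF.
rewrite -sum_eq1.
apply: eq_bigr => a _; congr ((_ : bool)%:R).
rewrite det2_lin subr_eq0; apply/eqP/eqP => [->|->]; first by rewrite mulfK.
by rewrite divfK.
Qed.

Lemma count_pt (r u : 'cV[F]_2) : u != 0 ->
  \sum_(a : F | a != 0) ((r - a *: u == 0)%:R : int) = (det2 r u == 0)%:R - (r == 0)%:R.
Proof.
move=> nz; have [g Hg] := exists_g nz.
have E : forall a, (r - a *: u == 0) = (det2 r u == 0) && (a == det2 r g / det2 u g).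
  move=> a; apply/eqP/andP => [E|[/eqP H1 /eqP H2]].
    have E' : r = a *: u by apply/eqP; rewrite -subr_eq0 E.
    by rewrite E' !det2Z det2_self mulr0 eqxx mulfK.
  apply: (zero_iff Hg); first by rewrite det2_lin det2_self mulr0 subr0.
  by rewrite det2_lin H2 divfK // subrr.
under eq_bigr => a _ do rewrite E.
have [d0|d0] := eqVneq (det2 r u) 0; last first.
  rewrite big1 //; have -> : (r == 0) = false.
    by apply/negbTE; apply: contra d0 => /eqP ->; rewrite det2_0.
  by rewrite subrr.
under eq_bigr => a _ do rewrite andTb.
rewrite sum_eq1 mulf_eq0 invr_eq0 (negbTE Hg) orbF.
have [->|rnz] := eqVneq r 0; first by rewrite det2_0 eqxx subrr.
have -> : det2 r g != 0.
  by apply/eqP => dg; move: rnz; rewrite (zero_iff Hg d0 dg) eqxx.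
by rewrite subr0.
Qed.


Definition Lc (S : {set 'I_n}) (r : 'cV[F]_2) := #|[set i in S | det2 r (col i H) == 0]|.
Fixpoint zz (p : int) (w : nat) : int :=
  if w is w'.+1 then p * zz p w' - (-1) ^+ w' * w'%:R else 0.

Lemma cnt0 (r : 'cV[F]_2) : cnt set0 r = (r == 0).
Proof.
have Hs : forall c, (supp c == set0) = (c == 0).
  move=> c; apply/eqP/eqP => [E|->]; last by apply/setP=> j; rewrite !inE mxE eqxx.
  apply/matrixP => i j; rewrite (ord1 i) mxE; apply/eqP; apply/negbNE.
  have : j \notin supp c by rewrite E inE.
  by rewrite /supp inE.
rewrite /cnt.
have -> : [set c | (supp c == set0) && (H *m c^T == r)] = if r == 0 then [set 0] else set0.
  apply/setP => c; rewrite inE Hs; case: (eqVneq r 0) => [->|rn]; rewrite ?inE;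
  case: (eqVneq c 0) => [->|cn] //=; rewrite ?trmx0 ?mulmx0 ?eqxx //.
  by apply/negbTE; rewrite eq_sym.
by case: (r == 0); rewrite ?cards1 ?cards0.
Qed.

Lemma Lsum (S : {set 'I_n}) (r : 'cV[F]_2) :
  (Lc S r)%:R = \sum_(i in S) ((det2 r (col i H) == 0)%:R : int).
Proof.
rewrite /Lc -sum1_card natr_sum big_mkcond /= [RHS]big_mkcond /=.
by apply: eq_bigr => i _; rewrite inE; case: (i \in S); case: (det2 _ _ == 0).
Qed.

Lemma cnt_formula (Hnz : forall j, col j H != 0)
  (Hind : forall i j, i != j -> det2 (col i H) (col j H) != 0)
  (S : {set 'I_n}) (r : 'cV[F]_2) :
  ((cnt S r)%:R : int) = zz (#|F|.-1)%:R #|S| + (-1) ^+ #|S| * ((r == 0)%:R - (Lc S r)%:R).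
Proof.
move Ew: #|S| => w; elim: w S Ew r => [|w IH] S Ew r.
  move/eqP: Ew; rewrite cards_eq0 => /eqP ->.
  rewrite cnt0 /Lc /= expr0 mul1r add0r.
  have -> : [set i in set0 | det2 r (col i H) == 0] = set0 by apply/setP => i; rewrite !inE.
  by rewrite cards0 subr0.
have [k kS] : exists k, k \in S.
  by apply/set0Pn; rewrite -card_gt0 Ew.
set S' := S :\ k.
have kS' : k \notin S' by rewrite !inE eqxx.
have cS' : #|S'| = w by move: Ew; rewrite (cardsD1 k S) kS add1n => -[].
rewrite -(setD1K kS) -/S' cnt_rec // natr_sum.
under eq_bigr => a _ do rewrite IH //.
rewrite big_split /= sumr_const -mulr_sumr sumrB.
have -> : #|(fun i : F => i != 0)| = #|F|.-1 by rewrite -(cardC1 (0 : F)); apply: eq_card.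
rewrite count_pt //.
under eq_bigr => a _ do rewrite Lsum.
rewrite exchange_big /=.
have -> : \sum_(j in S') \sum_(i | i != 0) ((det2 (r - i *: col k H) (col j H) == 0)%:R : int)
   = \sum_(j in S') (1 - (det2 r (col j H) == 0)%:R).
  apply: eq_bigr => j jS; rewrite count_line; last first.
    by apply: Hind; move: jS; rewrite !inE eq_sym => /andP[].
  by case: (det2 _ _ == 0).
rewrite sumrB sumr_const -Lsum cS' (Lsum (k |: S')) big_setU1 //= -Lsum exprS.
set Z := zz _ w; set s := (-1) ^+ w.
rewrite -[Z *+ _]mulr_natr; ring.
Qed.

Lemma det2_anti (u v : 'cV[F]_2) : det2 v u = - det2 u v.
Proof. by rewrite /det2; ring. Qed.

Lemma det2_prop (u v : 'cV[F]_2) : u != 0 -> det2 u v = 0 -> exists l, v = l *: u.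
Proof.
move=> nz d0; have [g Hg] := exists_g nz.
exists (det2 v g / det2 u g); apply/eqP; rewrite -subr_eq0; apply/eqP.
apply: (zero_iff Hg); first by rewrite det2_lin det2_self mulr0 subr0 det2_anti d0 oppr0.
by rewrite det2_lin divfK // subrr.
Qed.

Lemma wdist_sum (w : nat) :
  #|[set c : 'rV[F]_n | (H *m c^T == 0) && (#|supp c| == w)]| =
  (\sum_(S : {set 'I_n} | #|S| == w) cnt S 0)%N.
Proof.
rewrite -sum1_card (partition_big (fun c => supp c) (fun S : {set 'I_n} => #|S| == w)); last first.
  by move=> c; rewrite inE => /andP[].
apply: eq_bigr => S /eqP cS; rewrite /cnt -sum1_card; apply: eq_bigl => c.
rewrite !inE; case: (eqVneq (supp c) S) => [->|] /=; rewrite ?cS ?eqxx ?andbT ?andbF //.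
Qed.

Lemma wdist_formula (Hnz : forall j, col j H != 0)
  (Hind : forall i j, i != j -> det2 (col i H) (col j H) != 0) (w : nat) :
  ((#|[set c : 'rV[F]_n | (H *m c^T == 0) && (#|supp c| == w)]|)%:R : int) =
  'C(n, w)%:R * (zz (#|F|.-1)%:R w + (-1) ^+ w * (1 - w%:R)).
Proof.
rewrite wdist_sum natr_sum.
rewrite (eq_bigr (fun _ => zz (#|F|.-1)%:R w + (-1) ^+ w * (1 - w%:R))); last first.
  move=> S /eqP cS; rewrite cnt_formula // cS eqxx.
  suff -> : Lc S 0 = w by [].
  rewrite /Lc -cS; apply: eq_card => i; rewrite !inE det2_0 eqxx andbT //.
rewrite sumr_const mulr_natl; congr (_ *+ _).
have := card_draws ('I_n) w; rewrite card_ord => <-; apply: eq_card => S; by rewrite inE.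
Qed.

End Count.

Lemma zz_closed (q : int) (w : nat) :
  q ^+ 2 * zz (q - 1) w = (q - 1) ^+ w + (-1) ^+ w * (w%:R * q - 1).
Proof.
elim: w => [|w IH] /=; first by rewrite mulr0 expr0 mul1r mul0r; ring.
have -> : q ^+ 2 * ((q - 1) * zz (q - 1) w - (-1) ^+ w * w%:R)
  = (q - 1) * (q ^+ 2 * zz (q - 1) w) - (-1) ^+ w * w%:R * q ^+ 2 by ring.
rewrite IH [(q - 1) ^+ w.+1]exprS [(-1) ^+ w.+1]exprS.
have -> : (w.+1)%:R = w%:R + 1 :> int by rewrite -addn1 natrD.
ring.
Qed.

Lemma pcm_props (F : finFieldType) (n : nat) (H : 'M[F]_(2, n)) : hamming_pcm H ->
  (forall j, col j H != 0) /\ (forall i j, i != j -> det2 (col i H) (col j H) != 0).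
Proof.
case=> Hnz Hu; split => // i j ij; apply/eqP => d0.
have [l El] := det2_prop (Hnz i) d0.
have [j0 [_ Uj]] := Hu _ (Hnz i).
have Ei : i = j0 by apply/esym/Uj; exists 1; rewrite scale1r.
have Ej : j = j0 by apply/esym/Uj; exists l.
by move: ij; rewrite Ei Ej eqxx.
Qed.

Lemma A_formula (F : finFieldType) (H : 'M[F]_(2, #|F|.+1)) (w : nat) : hamming_pcm H ->
  ((wdist H w)%:R : int) * (#|F|%:R) ^+ 2 = ('C(#|F|.+1, w))%:R * Phi (#|F|%:R) w.
Proof.
move=> hp; have [Hnz Hind] := pcm_props hp.
have := wdist_formula Hnz Hind w.
rewrite /wdist /in_code /wt.
change [set c | (H *m c^T == 0) && (#|[set j | c 0 j != 0]| == w)] with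
  [set c | (H *m c^T == 0) && (#|supp c| == w)].
move=> ->.
have hq : (#|F|.-1)%:R = (#|F|%:R : int) - 1.
  have h0 : (0 < #|F|)%N by apply/card_gt0P; exists 0.
  by rewrite -{2}(prednK h0) -addn1 natrD addrK.
rewrite hq -mulrA; congr (_ * _).
have := zz_closed (#|F|%:R) w; rewrite /Phi => E.
rewrite mulrC mulrDr E; ring.
Qed.

Lemma powbound (P : int) (m : nat) : 8 <= P -> (2 <= m)%N -> m%:R * (P + 1) + 1 <= P ^+ m.
Proof.
move=> P8 m2; have -> : m = (m - 2 + 2)%N by rewrite subnK.
elim: (m - 2)%N => [|k IH]; first by rewrite add0n; nia.
rewrite addSn (exprS P).
have -> : (k + 2).+1%:R = (k + 2)%:R + 1 :> int by rewrite -addn1 natrD.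
move: IH; set z := (k + 2)%:R; set Y := P ^+ (k + 2) => IH.
have z0 : 0 <= z by rewrite /z ler0n.
have h : 8 * (z * (P + 1) + 1) <= P * Y by apply: ler_pM => //; nia.
clear -h z0 P8; nia.
Qed.

Lemma Phi_pos (q : int) (w : nat) : 9 <= q -> (3 <= w)%N -> 0 < Phi q w.
Proof.
move=> q9; case: w => [//|m] m3.
have [_ E1 _] := Phi_shape q m; rewrite E1 -signr_odd.
have m2 : (2 <= m)%N by [].
have P8 : 8 <= q - 1 by lia.
have hb := powbound P8 m2.
have e : q - 1 + 1 = q by ring.
rewrite e in hb.
move: hb; set P := q - 1; set X := P ^+ m; set mm : int := m%:R => hb.
have mm0 : 2 <= mm by rewrite /mm (ler_nat int 2 m).
have hX : P * (X - (mm * q - 1)) <= P * X - (-1) ^+ odd m * (P * (q + 1 - (mm + 1) * q)).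
  case: (odd m); rewrite ?expr1 ?expr0; clear -P8 mm0 hb q9; nia.
apply: lt_le_trans hX; apply: mulr_gt0; lia.
Qed.

Lemma nat_of_eqz (a b : nat) : (a%:R : int) = b%:R -> a = b.
Proof. by move/eqP; rewrite eqr_nat => /eqP. Qed.

Lemma ineq_core (q m : nat) (a b c : nat) : (9 <= q)%N -> (3 <= m)%N -> (m.+1 <= q)%N ->
  (a%:R : int) * (q%:R) ^+ 2 = ('C(q.+1, m))%:R * Phi q%:R m ->
  (b%:R : int) * (q%:R) ^+ 2 = ('C(q.+1, m.+1))%:R * Phi q%:R m.+1 ->
  (c%:R : int) * (q%:R) ^+ 2 = ('C(q.+1, m.+2))%:R * Phi q%:R m.+2 ->
  (a * c <= b ^ 2)%N.
Proof.
move=> q9 m3 mq Ea Eb Ec.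
rewrite -(ler_nat int) natrM natrX.
have Q0 : 0 < (q%:R : int) ^+ 2 by apply: exprn_gt0; rewrite ltr0n; lia.
rewrite -(ler_pM2r (mulr_gt0 Q0 Q0)).
have -> : a%:R * c%:R * ((q%:R : int) ^+ 2 * q%:R ^+ 2) = (a%:R * q%:R ^+ 2) * (c%:R * q%:R ^+ 2) by ring.
have -> : b%:R ^+ 2 * ((q%:R : int) ^+ 2 * q%:R ^+ 2) = (b%:R * q%:R ^+ 2) ^+ 2 by ring.
rewrite Ea Eb Ec.
have B1 := mul_bin_left q.+1 m.
have B2 := mul_bin_left q.+1 m.+1.
move: B1 B2; rewrite !subSS => B1 B2.
have B1z : (m.+1%:R : int) * 'C(q.+1, m.+1)%:R = (q%:R + 1 - m%:R) * 'C(q.+1, m)%:R.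
  have := congr1 (fun x => (x%:R : int)) B1; rewrite /= !natrM => ->.
  by rewrite -addn1 natrB ?natrD //; lia.
have B2z : (m.+2%:R : int) * 'C(q.+1, m.+2)%:R = (q%:R - m%:R) * 'C(q.+1, m.+1)%:R.
  have := congr1 (fun x => (x%:R : int)) B2; rewrite /= !natrM => ->.
  by rewrite natrB //; lia.
have D0 : 0 < (q%:R + 1 - m%:R : int) * (m.+2)%:R.
  have mq0 : (m%:R : int) <= q%:R by rewrite ler_nat; lia.
  by apply: mulr_gt0; [lia | rewrite ltr0n].
rewrite -(ler_pM2r D0).
have cr := core (m := m) (q := q%:R).
have q9' : 9 <= (q%:R : int) by rewrite (ler_nat int 9 q).
have mq' : (m.+1)%:R <= (q%:R : int) by rewrite ler_nat.
move: (cr q9' m3 mq') => {cr} cr.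
set Ca := 'C(q.+1, m)%:R in B1z *; set Cb := 'C(q.+1, m.+1)%:R in B1z B2z *;
set Cc := 'C(q.+1, m.+2)%:R in B2z *.
have -> : Ca * Phi q%:R m * (Cc * Phi q%:R m.+2) * ((q%:R + 1 - m%:R) * m.+2%:R)
  = ((q%:R + 1 - m%:R) * Ca) * (m.+2%:R * Cc) * (Phi q%:R m * Phi q%:R m.+2) by ring.
rewrite -B1z B2z.
have -> : m.+1%:R * Cb * ((q%:R - m%:R) * Cb) * (Phi q%:R m * Phi q%:R m.+2)
  = Cb ^+ 2 * (m.+1%:R * (q%:R - m%:R) * (Phi q%:R m * Phi q%:R m.+2)) by ring.
have -> : (Cb * Phi q%:R m.+1) ^+ 2 * ((q%:R + 1 - m%:R) * m.+2%:R)
  = Cb ^+ 2 * ((q%:R + 1 - m%:R) * m.+2%:R * Phi q%:R m.+1 ^+ 2) by ring.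
by apply: ler_wpM2l => //; apply: sqr_ge0.
Qed.

Lemma first_ineq (q a3 a4 : nat) : (9 <= q)%N ->
  (a3%:R : int) * (q%:R) ^+ 2 = ('C(q.+1, 3))%:R * Phi q%:R 3 ->
  (a4%:R : int) * (q%:R) ^+ 2 = ('C(q.+1, 4))%:R * Phi q%:R 4 ->
  (a4 <= a3 ^ 2)%N.
Proof.
move=> q9 E3 E4.
have Qnz : (q%:R : int) ^+ 2 != 0 by rewrite expf_eq0 pnatr_eq0 /=; lia.
have Q0 : 0 < (q%:R : int) ^+ 2 by apply: exprn_gt0; rewrite ltr0n; lia.
have q9' : 9 <= (q%:R : int) by rewrite (ler_nat int 9 q).
have P3 : Phi q%:R 3 = (q%:R - 1) * q%:R ^+ 2 by rewrite /Phi; ring.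
rewrite P3 [RHS]mulrA in E3; have {}E3 := mulIf Qnz E3.
have P4 : Phi q%:R 4 <= (q%:R - 1) ^+ 4.
  rewrite /Phi -[X in _ <= X]addr0 lerD2l.
  have -> : (-1) ^+ 4 = 1 :> int by [].
  rewrite mul1r; apply: mulr_ge0_le0; lia.
have B3 := mul_bin_left q.+1 3; have B2 := mul_bin_left q.+1 2; have B1 := mul_bin_left q.+1 1.
rewrite bin1 in B1.
have C3p : (0 < 'C(q.+1, 3))%N by rewrite bin_gt0; lia.
have C4le : ('C(q.+1, 4) <= 'C(q.+1, 3) ^ 2)%N.
  move: B3 B2 B1 C3p; move: ('C(q.+1, 4)) ('C(q.+1, 3)) ('C(q.+1, 2)) => c4 c3 c2.
  move=> B3 B2 B1 C3p.
  have : (4 * c4 <= 4 * c3 ^ 2)%N.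
    rewrite B3; have : (q.+1 - 3 <= 4 * c3)%N by nia.
    by move=> h; nia.
  by rewrite leq_pmul2l.
rewrite -(ler_nat int) natrX -(ler_pM2r Q0) E4 E3.
apply: (le_trans (y := ('C(q.+1, 4))%:R * (q%:R - 1) ^+ 4)).
  by apply: ler_wpM2l.
have hC : ('C(q.+1, 4)%:R : int) <= 'C(q.+1, 3)%:R ^+ 2 by rewrite -natrX ler_nat.
have -> : ('C(q.+1, 3)%:R * (q%:R - 1) : int) ^+ 2 * q%:R ^+ 2
  = 'C(q.+1, 3)%:R ^+ 2 * ((q%:R - 1) ^+ 2 * q%:R ^+ 2) by ring.
have -> : (q%:R - 1 : int) ^+ 4 = (q%:R - 1) ^+ 2 * (q%:R - 1) ^+ 2 by ring.
apply: ler_pM => //; rewrite ?exprn_ge0 ?mulr_ge0 ?exprn_ge0 //; try lia.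
Qed.


Theorem mainTheorem8 (F : finFieldType) (H : 'M[F]_(2, #|F|.+1)) :
  (9 <= #|F|)%N -> hamming_pcm H -> code_log_concave H.
Proof.
move=> q9 hp.
have AF := fun w => A_formula w hp.
move: AF; set q := #|F|; set A := wdist H => AF.
have Q0 : 0 < (q%:R : int) ^+ 2 by apply: exprn_gt0; rewrite ltr0n; lia.
have Qnz : (q%:R : int) ^+ 2 != 0 by rewrite gt_eqF.
have q9' : 9 <= (q%:R : int) by rewrite (ler_nat int 9 q).
have A0 : A 0 = 1%N.
  have := AF 0%N; rewrite bin0 mul1r.
  have -> : Phi q%:R 0 = 1 * (q%:R) ^+ 2 by rewrite /Phi; ring.
  by move/(mulIf Qnz) => E; apply: nat_of_eqz; rewrite E.
have A1 : A 1 = 0%N.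
  have := AF 1%N; have -> : Phi q%:R 1 = 0 * (q%:R) ^+ 2 by rewrite /Phi; ring.
  by rewrite mul0r mulr0 => /eqP; rewrite mulf_eq0 (negbTE Qnz) orbF pnatr_eq0 => /eqP.
have A2 : A 2 = 0%N.
  have := AF 2%N; have -> : Phi q%:R 2 = 0 * (q%:R) ^+ 2 by rewrite /Phi; ring.
  by rewrite mul0r mulr0 => /eqP; rewrite mulf_eq0 (negbTE Qnz) orbF pnatr_eq0 => /eqP.
have Apos : forall w, (3 <= w)%N -> (w <= q.+1)%N -> (0 < A w)%N.
  move=> w w3 wq; have := AF w.
  have h : 0 < ('C(q.+1, w)%:R : int) * Phi q%:R w.
    by apply: mulr_gt0; [rewrite ltr0n bin_gt0 | exact: Phi_pos].
  move=> E; rewrite -E in h.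
  by move: h; rewrite pmulr_lgt0 // ltr0n.
have Enz : nz_wdist H = 1%N :: [seq A w | w <- iota 3 q.-1].
  rewrite /nz_wdist.
  have -> : q.+2 = (q.-1).+3 by lia.
  rewrite /= -/A A0 A1 A2 /=; congr (_ :: _).
  apply/all_filterP; apply/allP => x /mapP[w]; rewrite mem_iota => /andP[w3 wq] ->.
  by rewrite -lt0n Apos //; lia.
have Enth : forall j, (1 <= j)%N -> (j < q)%N -> nth 0%N (nz_wdist H) j = A (j.+2).
  move=> j j1 jq; rewrite Enz; case: j j1 jq => [//|j] _ jq /=.
  rewrite (nth_map 0%N); last by rewrite size_iota; lia.
  by rewrite nth_iota; [congr A; lia | lia].
have Esz : size (nz_wdist H) = q by rewrite Enz /= size_map size_iota; lia.
rewrite /code_log_concave /log_concave_seq Esz => i i1 iq.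
case: (eqVneq i 1%N) => [->|ne1].
  rewrite (Enth 2%N) //; last by lia.
  rewrite (Enth 1%N) //; last by lia.
  have -> : nth 0%N (nz_wdist H) 1.-1 = 1%N by rewrite Enz.
  rewrite mul1n; exact: (first_ineq q9 (AF 3%N) (AF 4%N)).
have i2 : (2 <= i)%N by lia.
rewrite (Enth i.-1); [|lia|lia]. rewrite (Enth i); [|lia|lia]. rewrite (Enth i.+1); [|lia|lia].
have -> : (i.-1).+2 = (i.+1)%N by lia.
apply: (ineq_core (m := i.+1) q9 _ _ (AF _) (AF _) (AF _)); lia.
Qed.
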